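(* Let $\mathcal{M}=((X,\mathcal{C}),\mathcal{V})$ be a closure model and let $f:X\to X/{\equiv_{IML}}$ map each point to its $\equiv_{IML}$-equivalence class. For all $x_1,x_2\in X$ and $A\subseteq X$: if $x_1\equiv_{IML}x_2$ and $x_1\in\mathcal{C}(A)$, then $x_2\in\mathcal{C}(f^{-1}(f[A]))$.
   Context: Closure space $(X,\mathcal{C})$: $X$ non-empty, $\mathcal{C}(\emptyset)=\emptyset$, $A\subseteq\mathcal{C}(A)$, $\mathcal{C}(A_1\cup A_2)=\mathcal{C}(A_1)\cup\mathcal{C}(A_2)$; closure model adds $\mathcal{V}:AP\to\mathcal{P}(X)$. IML formulas: $\Phi::=p\mid\neg\Phi\mid\bigwedge_{i\in I}\Phi_i\mid\mathcal{N}\Phi$ ($I$ any set); $x\models p$ iff $x\in\mathcal{V}(p)$, negation and conjunction standard, $x\models\mathcal{N}\Phi$ iff $x\in\mathcal{C}(\{y\mid y\models\Phi\})$. $x_1\equiv_{IML}x_2$ iff they satisfy the same IML formulas. $f[A]=\{f(a)\mid a\in A\}$, $f^{-1}(B)=\{x\mid f(x)\in B\}$. *)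

(* Defs.v *)
Record is_closure (X : Type) (C : (X -> Prop) -> (X -> Prop)) : Prop := {
  closure_empty : forall x, ~ C (fun _ => False) x;
  closure_extensive : forall (A : X -> Prop) x, A x -> C A x;
  closure_union : forall (A1 A2 : X -> Prop) x,
      C (fun y => A1 y \/ A2 y) x <-> (C A1 x \/ C A2 x)
}.

Inductive iml_form (AP : Type) : Type :=
| fAtom : AP -> iml_form AP
| fNeg : iml_form AP -> iml_form AP
| fAnd : forall (I : Type), (I -> iml_form AP) -> iml_form AP
| fNear : iml_form AP -> iml_form AP.

Arguments fAtom {AP} _.
Arguments fNeg {AP} _.
Arguments fAnd {AP} _ _.
Arguments fNear {AP} _.

Fixpoint sat {X AP : Type} (C : (X -> Prop) -> (X -> Prop)) (V : AP -> X -> Prop)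
    (x : X) (phi : iml_form AP) {struct phi} : Prop :=
  match phi with
  | fAtom p => V p x
  | fNeg psi => ~ sat C V x psi
  | fAnd J phis => forall i : J, sat C V x (phis i)
  | fNear psi => C (fun y => sat C V y psi) x
  end.

Definition iml_equiv {X AP : Type} (C : (X -> Prop) -> (X -> Prop))
    (V : AP -> X -> Prop) (x1 x2 : X) : Prop :=
  forall phi : iml_form AP, sat C V x1 phi <-> sat C V x2 phi.

(* The quotient map f : X -> X/≡_IML, sending x to its equivalence class
   (represented as the predicate of points equivalent to x). *)
Definition iml_class {X AP : Type} (C : (X -> Prop) -> (X -> Prop))
    (V : AP -> X -> Prop) (x : X) : X -> Prop :=
  fun y => iml_equiv C V x y.

Definition image {X Y : Type} (f : X -> Y) (A : X -> Prop) : Y -> Prop :=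
  fun y => exists a, A a /\ f a = y.
Definition preimage {X Y : Type} (f : X -> Y) (B : Y -> Prop) : X -> Prop :=
  fun x => B (f x).

(* Main.v *)
Require Import Defs.
From Stdlib Require Import Classical ClassicalEpsilon FunctionalExtensionality PropExtensionality.

Section S.
Variables (X AP : Type) (C : (X -> Prop) -> (X -> Prop)) (V : AP -> X -> Prop).

Lemma sep y z : ~ iml_equiv C V y z -> exists psi, sat C V y psi /\ ~ sat C V z psi.
Proof.
  intros H. apply NNPP; intros H2. apply H. intros phi. split; intros Hp.
  - apply NNPP; intros Hn. apply H2. exists phi; auto.
  - apply NNPP; intros Hn. apply H2. exists (fNeg phi); simpl; auto.
Qed.

Definition delta (y : X) : iml_form AP :=
  fAnd {z : X | ~ iml_equiv C V y z}
    (fun zs => proj1_sig (constructive_indefinite_description _ (sep y (proj1_sig zs) (proj2_sig zs)))).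

Lemma delta_spec y z : sat C V z (delta y) <-> iml_equiv C V y z.
Proof.
  split.
  - intros H. apply NNPP; intros Hn. specialize (H (exist _ z Hn)). simpl in H.
    destruct (proj2_sig (constructive_indefinite_description _ (sep y z Hn))) as [_ Hp]. auto.
  - intros H [w Hw]. simpl.
    destruct (proj2_sig (constructive_indefinite_description _ (sep y w Hw))) as [Hy _].
    apply H. exact Hy.
Qed.

Lemma equiv_refl x : iml_equiv C V x x.
Proof. intros p; tauto. Qed.
Lemma equiv_sym x y : iml_equiv C V x y -> iml_equiv C V y x.
Proof. intros H p; specialize (H p); tauto. Qed.
Lemma equiv_trans x y z : iml_equiv C V x y -> iml_equiv C V y z -> iml_equiv C V x z.
Proof. intros H1 H2 p; specialize (H1 p); specialize (H2 p); tauto. Qed.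

Lemma class_eq x y : iml_equiv C V x y -> iml_class C V x = iml_class C V y.
Proof.
  intros H. apply functional_extensionality; intros w. unfold iml_class.
  apply propositional_extensionality. split; intros.
  - eapply equiv_trans; [apply equiv_sym, H|assumption].
  - eapply equiv_trans; eassumption.
Qed.

Definition phiB (B : X -> Prop) : iml_form AP :=
  fNeg (fAnd {y : X | B y} (fun ys => fNeg (delta (proj1_sig ys)))).

Lemma phiB_spec (A : X -> Prop) z :
  sat C V z (phiB (preimage (iml_class C V) (image (iml_class C V) A))) <->
  preimage (iml_class C V) (image (iml_class C V) A) z.
Proof.
  unfold phiB; cbn [sat]. split.
  - intros H. apply NNPP; intros Hn. apply H. intros [y Hy]. cbn [sat proj1_sig]; fold (delta y).
    rewrite delta_spec. intros He. apply Hn.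
    unfold preimage, image in *. destruct Hy as [a [Ha Hae]].
    exists a. split; auto. rewrite Hae. apply class_eq. auto.
  - intros H Hall. specialize (Hall (exist _ z H)). cbn [sat proj1_sig] in Hall.
    apply Hall. apply delta_spec. apply equiv_refl.
Qed.
End S.

Theorem lemma10 (X AP : Type) (C : (X -> Prop) -> (X -> Prop))
    (V : AP -> X -> Prop) (HC : is_closure X C)
    (x1 x2 : X) (A : X -> Prop) :
  iml_equiv C V x1 x2 ->
  C A x1 ->
  C (preimage (iml_class C V) (image (iml_class C V) A)) x2.
Proof.
  intros He HA.
  set (B := preimage (iml_class C V) (image (iml_class C V) A)).
  assert (EB : (fun y => sat C V y (phiB X AP C V B)) = B).
  { apply functional_extensionality; intros y. apply propositional_extensionality.
    apply phiB_spec. }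
  assert (HB1 : C B x1).
  { assert (EU : (fun y => A y \/ B y) = B).
    { apply functional_extensionality; intros y. apply propositional_extensionality.
      split; [|auto]. intros [Ha|Hb]; auto. unfold B, preimage, image.
      exists y; auto. }
    rewrite <- EU. apply (closure_union _ _ HC). auto. }
  assert (Hs : sat C V x1 (fNear (phiB X AP C V B))).
  { change (C (fun y => sat C V y (phiB X AP C V B)) x1). rewrite EB. exact HB1. }
  apply He in Hs. change (C (fun y => sat C V y (phiB X AP C V B)) x2) in Hs. rewrite EB in Hs. exact Hs.
Qed.
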